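(* Let $f,h:\mathbb{R}^d\to\mathbb{R}$ be closed convex, $a,b,\eta>0$, $\delta=\sqrt{2\eta/(d+2)}$, $\widetilde Q=\{(x,s,t):h(x)\le as,\ f(x)+as\le bt\}$. Let $(y,u,v)\in\mathbb{R}^{d+2}$, $q=(y,u,v-b\eta)$, $p_{k-1}\in\widetilde Q$, $r_{\mathrm{loc}}=\|p_{k-1}-q\|$, $\widetilde Q_{\mathrm{loc}}=\widetilde Q\cap\{p:\|p-q\|\le2r_{\mathrm{loc}}\}$, and $\widetilde\Theta(p)=I_{\widetilde Q}(p)+\frac1{2\eta}\|p-q\|^2+bv-\frac{\eta b^2}2$. Let $\tilde p\in\widetilde Q_{\mathrm{loc}}$ satisfy $\widetilde\Theta(\tilde p)-\min_{\widetilde Q_{\mathrm{loc}}}\widetilde\Theta\le\frac1{d+2}$, and define $$\widetilde{\mathcal P}_1(p)=\frac{\|p-\tilde p\|^2+\|\tilde p-q\|^2}{2\eta}-\frac\delta\eta(\|p-\tilde p\|+\|\tilde p-q\|)+bv-\frac{b^2\eta}2-\frac{\delta^2}\eta.$$ Then $\widetilde{\mathcal P}_1(p)\le\widetilde\Theta(p)$ for all $p\in\mathbb{R}^{d+2}$.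
   Context: $I_{\widetilde Q}$ is $0$ on $\widetilde Q$ and $+\infty$ off it. *)

(* Defs.v *)
From HB Require Import structures.
From mathcomp Require Import all_boot all_order all_algebra.
From mathcomp Require Import all_classical all_reals all_analysis.
Set Implicit Arguments. Unset Strict Implicit. Unset Printing Implicit Defensive.
Import Order.TTheory GRing.Theory Num.Theory.
Import numFieldNormedType.Exports.
Local Open Scope ring_scope.
Local Open Scope classical_set_scope.

(* points of R^{d+2} written as triples (x, s, t), x : R^d *)
Definition pt (R : realType) (d : nat) := ('rV[R]_d * R * R)%type.

Definition sqnormv (R : realType) d (x : 'rV[R]_d) : R := \sum_(i < d) x ord0 i ^+ 2.

Definition dist2 (R : realType) d (p q : pt R d) : R :=
  sqnormv (p.1.1 - q.1.1) + (p.1.2 - q.1.2) ^+ 2 + (p.2 - q.2) ^+ 2.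
Definition dist (R : realType) d (p q : pt R d) : R := Num.sqrt (dist2 p q).

Definition convex_fun (R : realType) d (f : 'rV[R]_d -> R) : Prop :=
  forall (x y : 'rV[R]_d) (l : R), 0 <= l -> l <= 1 ->
    f (l *: x + (1 - l) *: y) <= l * f x + (1 - l) * f y.

Definition closed_fun (R : realType) d (f : 'rV[R]_d -> R) : Prop :=
  closed [set z : 'rV[R]_d * R | f z.1 <= z.2].

Definition Qt (R : realType) d (f h : 'rV[R]_d -> R) (a b : R) : set (pt R d) :=
  [set p | h p.1.1 <= a * p.1.2 /\ f p.1.1 + a * p.1.2 <= b * p.2].

Definition Theta (R : realType) d (f h : 'rV[R]_d -> R) (a b eta v : R) (q p : pt R d)
  : \bar R :=
  ((if `[< Qt f h a b p >] then 0%E else +oo%E)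
   + (dist2 p q / (2 * eta) + b * v - eta * b ^+ 2 / 2)%:E)%E.

Definition P1 (R : realType) d (b eta v delta : R) (q pt_ p : pt R d) : R :=
  (dist2 p pt_ + dist2 pt_ q) / (2 * eta)
  - delta / eta * (dist p pt_ + dist pt_ q)
  + b * v - b ^+ 2 * eta / 2 - delta ^+ 2 / eta.

(* Main.v *)
Require Import Defs.
From HB Require Import structures.
From mathcomp Require Import all_boot all_order all_algebra.
From mathcomp Require Import all_classical all_reals all_analysis.
From mathcomp Require Import ring lra.
Import Order.TTheory GRing.Theory Num.Theory.
Import numFieldNormedType.Exports.
Local Open Scope ring_scope.
Local Open Scope classical_set_scope.


Set Implicit Arguments.
Section S.
Variables (R : realType) (d : nat).

Definition ipv (x y : 'rV[R]_d) : R := \sum_(i < d) x ord0 i * y ord0 i.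

Lemma sq_seg (x p q : 'rV[R]_d) (t : R) :
  sqnormv (x + t *: (p - x) - q) =
  sqnormv (x - q) - 2 * t * ipv (p - x) (q - x) + t ^+ 2 * sqnormv (p - x).
Proof.
rewrite /sqnormv /ipv !mulr_sumr -sumrB -big_split /=.
by apply: eq_bigr => i _; rewrite !mxE; ring.
Qed.

Definition seg (x p : pt R d) (t : R) : pt R d :=
  (x.1.1 + t *: (p.1.1 - x.1.1), x.1.2 + t * (p.1.2 - x.1.2), x.2 + t * (p.2 - x.2)).

Definition cross (x p q : pt R d) : R :=
  ipv (p.1.1 - x.1.1) (q.1.1 - x.1.1) + (p.1.2 - x.1.2) * (q.1.2 - x.1.2)
  + (p.2 - x.2) * (q.2 - x.2).

Lemma dist2_seg x p q t :
  dist2 (seg x p t) q = dist2 x q - 2 * t * cross x p q + t ^+ 2 * dist2 p x.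
Proof.
rewrite /dist2 /seg /cross /= sq_seg.
have -> : sqnormv (p.1.1 - x.1.1) = sqnormv (x.1.1 - p.1.1) - 0.
  rewrite subr0 /sqnormv; apply: eq_bigr => i _; rewrite !mxE; ring.
ring.
Qed.

Lemma seg1 x p : seg x p 1 = p.
Proof.
rewrite /seg !mul1r scale1r !(addrC _ (_ - _)) !subrK.
by case: p => [[]].
Qed.

Lemma seg_conv (x p : 'rV[R]_d) t : x + t *: (p - x) = t *: p + (1 - t) *: x.
Proof. by rewrite scalerBr scalerBl scale1r addrCA addrA. Qed.

End S.

Lemma core (R : realType) (A c dl : R) : 0 <= A -> 0 < dl ->
  (forall t, 0 <= t -> t <= 1 -> t ^+ 2 * A ^+ 2 <= 2 * t * c ->
      2 * t * c <= t ^+ 2 * A ^+ 2 + dl ^+ 2) ->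
  c <= dl * A + dl ^+ 2.
Proof.
move=> A0 dl0 H; rewrite leNgt; apply/negP => hc.
case: (leP A dl) => hA.
  have := H 1 ler01 (lexx _); rewrite !expr1n !mul1r mulr1.
  have hA2 : A ^+ 2 <= dl ^+ 2 by rewrite ler_sqr // nnegrE ?ltW.
  have hdA : 0 <= dl * A by rewrite mulr_ge0 // ltW.
  have c0 : 0 < c by have := exprn_ge0 2 (ltW dl0); lra.
  have hc2 : A ^+ 2 <= 2 * c by lra.
  move=> /(_ hc2); lra.
pose t := dl / A.
have Ap : 0 < A by exact: lt_trans hA.
have tA : t * A = dl by rewrite /t mulfVK // gt_eqF.
have t0 : 0 <= t by rewrite /t divr_ge0 // ltW.
have t1 : t <= 1 by rewrite /t ler_pdivrMr // mul1r ltW.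
have := H t t0 t1.
have e : t ^+ 2 * A ^+ 2 = dl ^+ 2 by rewrite -exprMn tA.
rewrite e => H'.
have h1 : dl ^+ 2 <= 2 * t * c.
  have : t * c >= t * (dl * A + dl ^+ 2) by rewrite ler_wpM2l // ltW.
  have : t * (dl * A) = dl ^+ 2 by rewrite mulrA (mulrC t) -mulrA tA expr2.
  have : 0 <= t * dl ^+ 2 by rewrite mulr_ge0 // exprn_ge0 // ltW.
  nra.
have h2 := H' h1.
have h2' : 2 * t * c <= 2 * dl ^+ 2 by lra.
have : 2 * t * c * A <= 2 * dl ^+ 2 * A by rewrite ler_wpM2r // ltW.
have -> : 2 * t * c * A = 2 * dl * c by rewrite -tA; ring.
move=> h3.
have : dl * c <= dl * (dl * A) by rewrite expr2 in h3; nra.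
rewrite ler_pM2l // => h4.
have : 0 < dl ^+ 2 by rewrite exprn_gt0.
lra.
Qed.

Lemma sqnormv_ge0 (R : realType) d (x : 'rV[R]_d) : 0 <= sqnormv x.
Proof. by apply: sumr_ge0 => i _; exact: sqr_ge0. Qed.

Lemma dist2_ge0 (R : realType) d (p q : pt R d) : 0 <= dist2 p q.
Proof. by rewrite /dist2 !addr_ge0 ?sqr_ge0 ?sqnormv_ge0. Qed.

Lemma Qt_seg (R : realType) d (f h : 'rV[R]_d -> R) a b (x p : pt R d) t :
  convex_fun f -> convex_fun h -> 0 < a -> 0 < b ->
  Qt f h a b x -> Qt f h a b p -> 0 <= t -> t <= 1 -> Qt f h a b (seg x p t).
Proof.
move=> cf ch a0 b0 [hx fx] [hp fp] t0 t1.
have t1' : 0 <= 1 - t by rewrite subr_ge0.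
rewrite /Qt /seg /= seg_conv; split.
  have := ch p.1.1 x.1.1 t t0 t1.
  have := ler_wpM2l t0 hp; have := ler_wpM2l t1' hx.
  move=> e1 e2 e3; apply: (le_trans e3).
  have -> : a * (x.1.2 + t * (p.1.2 - x.1.2)) = t * (a * p.1.2) + (1 - t) * (a * x.1.2) by ring.
  exact: lerD.
have := cf p.1.1 x.1.1 t t0 t1.
have := ler_wpM2l t0 fp; have := ler_wpM2l t1' fx.
move=> e1 e2 e3.
have -> : b * (x.2 + t * (p.2 - x.2)) = t * (b * p.2) + (1 - t) * (b * x.2) by ring.
have -> : a * (x.1.2 + t * (p.1.2 - x.1.2)) = t * (a * p.1.2) + (1 - t) * (a * x.1.2) by ring.
lra.
Qed.

Theorem lemma23 (R : realType) (d : nat) (f h : 'rV[R]_d -> R) (a b eta : R)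
  (y : 'rV[R]_d) (u v : R) (pk1 ptilde : pt R d) :
  convex_fun f -> closed_fun f -> convex_fun h -> closed_fun h ->
  0 < a -> 0 < b -> 0 < eta ->
  let delta := Num.sqrt (2 * eta / (d + 2)%:R) in
  let q : pt R d := (y, u, v - b * eta) in
  Qt f h a b pk1 ->
  let rloc := dist pk1 q in
  let Qloc := [set p | Qt f h a b p /\ dist p q <= 2 * rloc] in
  Qloc ptilde ->
  (forall p, Qloc p ->
     (Theta f h a b eta v q ptilde - Theta f h a b eta v q p <= (1 / (d + 2)%:R)%:E)%E) ->
  forall p : pt R d, ((P1 b eta v delta q ptilde p)%:E <= Theta f h a b eta v q p)%E.
Proof.
move=> cf _ ch _ a0 b0 e0 delta q _ rloc Qloc [Qpt dpt] Hmin p.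
rewrite /Theta.
case: (asboolP (Qt f h a b p)) => Qp; last by rewrite addye // leey.
rewrite add0e lee_fin.
have dpos : 0 < (d + 2)%:R :> R by rewrite ltr0n addn2.
have pz : 0 < 2 * eta / (d + 2)%:R by rewrite divr_gt0 // mulr_gt0.
have dl2 : delta ^+ 2 = 2 * eta / (d + 2)%:R by rewrite sqr_sqrtr // ltW.
have dl0 : 0 < delta by rewrite sqrtr_gt0.
set A := dist p ptilde.
set c := cross ptilde p q.
have A0 : 0 <= A by exact: sqrtr_ge0.
have AA : A ^+ 2 = dist2 p ptilde by rewrite sqr_sqrtr // dist2_ge0.
have key : c <= delta * A + delta ^+ 2.
  apply: core => // t t0 t1 ht.
  have Hs := dist2_seg ptilde p q t.
  have Hle : dist2 (seg ptilde p t) q <= dist2 ptilde q.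
    rewrite Hs -AA -/c; lra.
  have Ql : Qloc (seg ptilde p t).
    split; first exact: Qt_seg.
    apply: le_trans dpt; exact: ler_wsqrtr.
  have := Hmin _ Ql; rewrite /Theta !asboolT //; last exact: Qt_seg.
  rewrite !add0e -EFinB lee_fin => H.
  have H2 : dist2 ptilde q - dist2 (seg ptilde p t) q <= delta ^+ 2.
    have : (dist2 ptilde q - dist2 (seg ptilde p t) q) / (2 * eta) <= 1 / (d + 2)%:R.
      by move: H; congr (_ <= _); field; rewrite gt_eqF.
    rewrite ler_pdivrMr ?mulr_gt0 // dl2 => H3.
    by move: H3; congr (_ <= _); field; rewrite gt_eqF.
  move: H2; rewrite Hs -AA -/c; lra.
have Hp := dist2_seg ptilde p q 1; rewrite seg1 in Hp.
have B0 : 0 <= dist ptilde q by exact: sqrtr_ge0.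
rewrite /P1 -/A Hp.
set B := dist ptilde q.
rewrite -/c -subr_ge0.
have E : forall X Y : R, (Y - 2 * 1 * c + 1 ^+ 2 * X) / (2 * eta) + b * v - eta * b ^+ 2 / 2
   - ((X + Y) / (2 * eta) - delta / eta * (A + B) + b * v - b ^+ 2 * eta / 2 - delta ^+ 2 / eta)
   = (delta * A + delta * B + delta ^+ 2 - c) / eta.
  by move=> X Y; field; rewrite gt_eqF.
rewrite E; apply: divr_ge0; last exact: ltW.
have : 0 <= delta * B by rewrite mulr_ge0 // ltW.
lra.
Qed.
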